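(* There exist real numbers $\delta,\varepsilon$ with $0<\delta<\varepsilon<1/2$ and an integer $n>1$ such that $P_{\varepsilon,\delta}$ is a quantum system and $\mathrm{NDP}_n(P_{\varepsilon,\delta})$ is a non-locality-distillation protocol, i.e. $NL[P_{\varepsilon,\delta}^n]>NL[P_{\varepsilon,\delta}]>2$.
   Context: A binary-input/binary-output bipartite system is a conditional probability distribution $P(ab|xy)$ with $a,b,x,y\in\{0,1\}$ ($x,a$ Alice's input/output, $y,b$ Bob's). Correlation functions: $X_{xy}(P)=P(00|xy)+P(11|xy)-P(01|xy)-P(10|xy)$. CHSH non-locality: $NL[P]=\max_{x,y\in\{0,1\}}|X_{xy}(P)+X_{x\bar y}(P)+X_{\bar x y}(P)-X_{\bar x\bar y}(P)|$, with $\bar0=1,\bar1=0$. A system $P$ is a quantum system if there exist Hilbert spaces $H_A,H_B$, a density operator $\rho$ on $H_A\otimes H_B$, and for each $x\in\{0,1\}$ a two-outcome POVM $\{E^x_a\}_{a\in\{0,1\}}$ on $H_A$ and for each $y$ a two-outcome POVM $\{F^y_b\}_{b\in\{0,1\}}$ on $H_B$ with $P(ab|xy)=\mathrm{tr}(\rho\,(E^x_a\otimes F^y_b))$ for all $a,b,x,y$. Protocol $\mathrm{NDP}_n(P)$: on inputs $x,y$ the parties feed $x$ and $y$ into each of $n$ independent copies of $P$, obtaining $(a_i,b_i)\sim P(a_ib_i|xy)$ independently for $i=1,\dots,n$, and output $a=a_1\oplus\cdots\oplus a_n$, $b=b_1\oplus\cdots\oplus b_n$; the induced distribution of $(a,b)$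 given $(x,y)$ is $P^n$. A non-locality-distillation protocol is one for which $NL[P^n]>NL[P]>2$. For $0\le\varepsilon,\delta\le 1$, $P_{\varepsilon,\delta}$ is the system with $P_{\varepsilon,\delta}(00|xy)=P_{\varepsilon,\delta}(11|xy)=(1-\delta)/2$, $P_{\varepsilon,\delta}(01|xy)=P_{\varepsilon,\delta}(10|xy)=\delta/2$ for $xy\in\{00,01,10\}$, and $P_{\varepsilon,\delta}(00|11)=P_{\varepsilon,\delta}(11|11)=(1-\varepsilon)/2$, $P_{\varepsilon,\delta}(01|11)=P_{\varepsilon,\delta}(10|11)=\varepsilon/2$. *)

(* Defs.v *)
From HB Require Import structures.
From mathcomp Require Import all_boot all_order all_algebra all_field.
Set Implicit Arguments. Unset Strict Implicit. Unset Printing Implicit Defensive.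
Import Order.TTheory GRing.Theory Num.Theory.
Local Open Scope ring_scope.

(* A binary-input/binary-output bipartite system: P a b x y = P(ab|xy).
   The alphabet {0,1} is represented by bool (false = 0, true = 1). *)
Definition bsystem := bool -> bool -> bool -> bool -> algC.

Definition corr (P : bsystem) (x y : bool) : algC :=
  P false false x y + P true true x y - P false true x y - P true false x y.

Definition chsh (P : bsystem) (x y : bool) : algC :=
  `| corr P x y + corr P x (~~ y) + corr P (~~ x) y - corr P (~~ x) (~~ y) |.

Definition NL (P : bsystem) : algC :=
  Num.max (Num.max (chsh P false false) (chsh P false true))
          (Num.max (chsh P true false) (chsh P true true)).

(* Distribution of (a1 xor a2, b1 xor b2) for independent copies P, Q
   fed with the same inputs. *)
Definition xor_comb (P Q : bsystem) : bsystem := fun a b x y =>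
  \sum_(a1 : bool) \sum_(b1 : bool) P a1 b1 x y * Q (addb a a1) (addb b b1) x y.

(* P^n : XOR of the outputs of n independent copies (empty XOR = 0). *)
Fixpoint ndp (n : nat) (P : bsystem) : bsystem :=
  match n with
  | 0 => fun a b _ _ => if (~~ a) && (~~ b) then 1 else 0
  | n'.+1 => xor_comb P (ndp n' P)
  end.

Definition Ped (eps delta : algC) : bsystem := fun a b x y =>
  let e := if x && y then eps else delta in
  if a == b then (1 - e) / 2 else e / 2.

Definition adjmx m n (M : 'M[algC]_(m, n)) : 'M[algC]_(n, m) := (map_mx Num.conj M)^T.

Definition psdmx n (M : 'M[algC]_n) : Prop :=
  forall v : 'cV[algC]_n, 0 <= (adjmx v *m M *m v) 0 0.

Definition density n (rho : 'M[algC]_n) : Prop := psdmx rho /\ \tr rho = 1.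

Definition povm2 n (E : bool -> 'M[algC]_n) : Prop :=
  psdmx (E false) /\ psdmx (E true) /\ E false + E true = 1%:M.

(* index k of C^m (x) C^n = C^(m*n) as a pair (i, j) *)
Definition tens_index m n (k : 'I_(m * n)) : 'I_m * 'I_n :=
  enum_val (cast_ord (esym (mxvec_cast m n)) k).

Definition tensmx m n (A : 'M[algC]_m) (B : 'M[algC]_n) : 'M[algC]_(m * n) :=
  \matrix_(k, l) (A (tens_index k).1 (tens_index l).1 *
                  B (tens_index k).2 (tens_index l).2).

Definition quantum_system (P : bsystem) : Prop :=
  exists (dA dB : nat) (rho : 'M[algC]_(dA * dB))
         (E : bool -> bool -> 'M[algC]_dA) (F : bool -> bool -> 'M[algC]_dB),
    density rho /\ (forall x, povm2 (E x)) /\ (forall y, povm2 (F y)) /\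
    forall a b x y, P a b x y = \tr (rho *m tensmx (E x a) (F y b)).

(* Main.v *)
Require Import Defs.
From HB Require Import structures.
From mathcomp Require Import all_boot all_order all_algebra all_field.
From Stdlib Require Import Ring.
Set Implicit Arguments. Unset Strict Implicit. Unset Printing Implicit Defensive.
Import Order.TTheory GRing.Theory Num.Theory.
Local Open Scope ring_scope.

Lemma algC_rt : @ring_theory algC 0 1 +%R *%R (fun x y => x - y) -%R eq.
Proof.
constructor; [exact: add0r|exact: addrC|exact: addrA|exact: mul1r|exact: mulrC
 |exact: mulrA|exact: mulrDl|by []|exact: subrr].
Qed.
Add Ring algCr : algC_rt.
Notation CT := Algebraics.Implementation.type.
Notation iAdd := Algebraics.Implementation_type__canonical__Algebra_BaseAddMagma.
Notation iZero := Algebraics.Implementation_type__canonical__Algebra_BaseAddUMagma.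
Notation iMul := Algebraics.Implementation_type__canonical__GRing_PzSemiRing.
Notation iOpp := Algebraics.Implementation_type__canonical__Algebra_BaseZmodule.
Ltac normC :=
  repeat match goal with
  | |- context [@Algebra.add ?i] =>
      tryif constr_eq i iAdd then fail else change (@Algebra.add i) with (@Algebra.add iAdd)
  | |- context [@GRing.mul ?i] =>
      tryif constr_eq i iMul then fail else change (@GRing.mul i) with (@GRing.mul iMul)
  | |- context [@Algebra.opp ?i] =>
      tryif constr_eq i iOpp then fail else change (@Algebra.opp i) with (@Algebra.opp iOpp)
  | |- context [@Algebra.zero ?i] =>
      tryif constr_eq i iZero then fail else change (@Algebra.zero i) with (@Algebra.zero iZero)
  | |- context [@GRing.one ?i] =>
      tryif constr_eq i iMul then fail else change (@GRing.one i) with (@GRing.one iMul)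
  end;
  match goal with |- @eq _ ?a ?b => change (@eq CT a b) end.
Definition algC_rt2 : @ring_theory (Algebra.BaseAddMagma.sort iAdd) 0 1 +%R *%R (fun x y => x - y) -%R (@eq CT) := algC_rt.
Add Ring algCr2 : algC_rt2.
Ltac cring := normC; ring.


Lemma rat_rt : @ring_theory rat 0 1 +%R *%R (fun x y => x - y) -%R eq.
Proof.
constructor; [exact: add0r|exact: addrC|exact: addrA|exact: mul1r|exact: mulrC
 |exact: mulrA|exact: mulrDl|by []|exact: subrr].
Qed.
Add Ring ratr_ring : rat_rt.

Lemma tens_index_mx m n (i : 'I_m) (j : 'I_n) : tens_index (mxvec_index i j) = (i, j).
Proof. by rewrite /tens_index /mxvec_index cast_ordK enum_rankK. Qed.

Lemma sum_tens (R : nmodType) m n (G : 'I_m * 'I_n -> R) :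
  \sum_(k : 'I_(m * n)) G (tens_index k) = \sum_(p : 'I_m * 'I_n) G p.
Proof.
rewrite (reindex (fun p : 'I_m * 'I_n => mxvec_index p.1 p.2)) /=.
  by apply: eq_bigr => -[i j] _; rewrite tens_index_mx.
exists (@tens_index m n) => [[i j] _|k _]; first by rewrite tens_index_mx.
by case: (mxvec_indexP k) => i j; rewrite tens_index_mx.
Qed.

Lemma corr_xor (P Q : bsystem) x y : corr (xor_comb P Q) x y = corr P x y * corr Q x y.
Proof. rewrite /corr /xor_comb !big_bool /=. cring. Qed.

Lemma sum2 (R : nmodType) (F : 'I_2 -> R) : \sum_(i < 2) F i = F ord0 + F ord_max.
Proof. by rewrite big_ord_recl big_ord1; congr (_ + _); congr F; apply: val_inj. Qed.

Lemma sum_pair2 (R : nmodType) (G : 'I_2 * 'I_2 -> R) : \sum_p G p =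
  G (ord0, ord0) + G (ord0, ord_max) + (G (ord_max, ord0) + G (ord_max, ord_max)).
Proof.
rewrite (eq_bigr (fun p => G (p.1, p.2))); last by case.
by rewrite -(pair_big xpredT xpredT (fun i j => G (i, j))) /= sum2 !sum2.
Qed.


Definition tensG (R : pzRingType) m n (A : 'M[R]_m) (B : 'M[R]_n) : 'M[R]_(m * n) :=
  \matrix_(k, l) (A (tens_index k).1 (tens_index l).1 *
                  B (tens_index k).2 (tens_index l).2).

Definition eN (x a : bool) (i j : nat) : int :=
 match x, a with
 | false, false => if (i == 0)%N && (j == 0)%N then 169 else 0
 | false, true => if (i == 1)%N && (j == 1)%N then 169 else 0
 | true, false => if (i == 0)%N then if (j == 0)%N then 144 else 60
                   else if (j == 0)%N then 60 else 25
 | true, true => if (i == 0)%N then if (j == 0)%N then 25 else - 60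
                   else if (j == 0)%N then - 60 else 144
 end.

Definition fN (y b : bool) (i j : nat) : int :=
 match y, b with
 | false, false => if (i == 0)%N then if (j == 0)%N then 25 else 5
                   else if (j == 0)%N then 5 else 1
 | false, true => if (i == 0)%N then if (j == 0)%N then 1 else - 5
                   else if (j == 0)%N then - 5 else 25
 | true, false => if (i == 0)%N then if (j == 0)%N then 25 else - 5
                   else if (j == 0)%N then - 5 else 1
 | true, true => if (i == 0)%N then if (j == 0)%N then 1 else 5
                   else if (j == 0)%N then 5 else 25
 end.

Definition EN x a : 'M[int]_2 := \matrix_(i, j) eN x a i j.
Definition FN y b : 'M[int]_2 := \matrix_(i, j) fN y b i j.

Definition rf (p q : 'I_2 * 'I_2) : int :=
  if ((p.1 : nat) == p.2) && ((q.1 : nat) == q.2) then 1 else 0.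
Definition rhoN : 'M[int]_(2 * 2) := \matrix_(k, l) rf (tens_index k) (tens_index l).

Definition tN x a y b : int :=
  eN x a 0 0 * fN y b 0 0 + eN x a 0 1 * fN y b 0 1 +
  (eN x a 1 0 * fN y b 1 0 + eN x a 1 1 * fN y b 1 1).

Lemma trace_N x a y b :
  \tr (rhoN *m tensG (EN x a) (FN y b)) = tN x a y b.
Proof.
rewrite /mxtrace.
under eq_bigr => k _ do rewrite mxE.
under eq_bigr => k _ do under eq_bigr => l _ do rewrite !mxE.
under eq_bigr => k _ do rewrite (sum_tens (fun q => rf (tens_index k) q *
   (eN x a q.1 (tens_index k).1 * fN y b q.2 (tens_index k).2))).
rewrite (sum_tens (fun p => \sum_q rf p q * (eN x a q.1 p.1 * fN y b q.2 p.2))).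
rewrite sum_pair2 !sum_pair2 /=.
by case: x; case: a; case: y; case: b; apply/eqP; vm_compute.
Qed.


Lemma ord2_cases (i : 'I_2) : i = ord0 \/ i = ord_max.
Proof. by case: i => -[|[|//]] ?; [left|right]; apply: val_inj. Qed.

Lemma EN_idem x a : EN x a *m EN x a = 169 *: EN x a.
Proof.
apply/matrixP => i j; rewrite !mxE sum2 !mxE.
by case: (ord2_cases i) => ->; case: (ord2_cases j) => ->; case: x; case: a;
  apply/eqP; vm_compute.
Qed.

Lemma FN_idem y b : FN y b *m FN y b = 26 *: FN y b.
Proof.
apply/matrixP => i j; rewrite !mxE sum2 !mxE.
by case: (ord2_cases i) => ->; case: (ord2_cases j) => ->; case: y; case: b;
  apply/eqP; vm_compute.
Qed.

Lemma EN_sym x a : (EN x a)^T = EN x a.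
Proof.
apply/matrixP => i j; rewrite !mxE.
by case: (ord2_cases i) => ->; case: (ord2_cases j) => ->; case: x; case: a.
Qed.

Lemma FN_sym y b : (FN y b)^T = FN y b.
Proof.
apply/matrixP => i j; rewrite !mxE.
by case: (ord2_cases i) => ->; case: (ord2_cases j) => ->; case: y; case: b.
Qed.

Lemma EN_sum x : EN x false + EN x true = 169%:M.
Proof.
apply/matrixP => i j; rewrite !mxE.
by case: (ord2_cases i) => ->; case: (ord2_cases j) => ->; case: x;
  apply/eqP; vm_compute.
Qed.

Lemma FN_sum y : FN y false + FN y true = 26%:M.
Proof.
apply/matrixP => i j; rewrite !mxE.
by case: (ord2_cases i) => ->; case: (ord2_cases j) => ->; case: y;
  apply/eqP; vm_compute.
Qed.

Lemma rhoN_sym : rhoN^T = rhoN.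
Proof. by apply/matrixP => k l; rewrite !mxE /rf andbC. Qed.

Lemma rhoN_idem : rhoN *m rhoN = 2 *: rhoN.
Proof.
apply/matrixP => k l; rewrite !mxE.
under eq_bigr => m _ do rewrite !mxE.
rewrite (sum_tens (fun q => rf (tens_index k) q * rf q (tens_index l))) sum_pair2.
case: (tens_index k) => i j; case: (tens_index l) => i' j'.
by case: (ord2_cases i) => ->; case: (ord2_cases j) => ->;
   case: (ord2_cases i') => ->; case: (ord2_cases j') => ->; apply/eqP; vm_compute.
Qed.

Lemma rhoN_tr : \tr rhoN = 2.
Proof.
rewrite /mxtrace; under eq_bigr => k _ do rewrite mxE.
rewrite (sum_tens (fun p => rf p p)) sum_pair2.
by apply/eqP; vm_compute.
Qed.


Lemma adjmxM m n p (A : 'M[algC]_(m, n)) (B : 'M[algC]_(n, p)) :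
  adjmx (A *m B) = adjmx B *m adjmx A.
Proof. by rewrite /adjmx map_mxM trmx_mul. Qed.

Lemma psd_proj n (M : 'M[algC]_n) : adjmx M = M -> M *m M = M -> psdmx M.
Proof.
move=> hA hI v.
rewrite -hI -{1}hA -!mulmxA mulmxA -adjmxM.
rewrite !mxE; apply: sumr_ge0 => i _.
rewrite /adjmx !mxE mulrC; exact: mul_conjC_ge0.
Qed.

Lemma psd_scaled n (N : 'M[int]_n) (c : algC) (k : int) :
  N^T = N -> N *m N = k *: N -> c * k%:~R = 1 -> c^* = c ->
  psdmx (c *: map_mx intr N).
Proof.
move=> hT hN hck hc; apply: psd_proj.
  apply/matrixP => i j; rewrite /adjmx !mxE rmorphM rmorph_int; congr (_ * _); first exact: hc.
  by have := congr1 (fun M : 'M[int]_n => M i j) hT; rewrite mxE => ->.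
rewrite -scalemxAl -scalemxAr scalerA -map_mxM hN map_mxZ scalerA.
by rewrite -mulrA hck mulr1.
Qed.

Lemma tensmx_scale (a b : algC) m n (A : 'M[algC]_m) (B : 'M[algC]_n) :
  tensmx (a *: A) (b *: B) = (a * b) *: tensmx A B.
Proof. by apply/matrixP => k l; rewrite !mxE mulrACA. Qed.

Lemma tensmx_map m n (A : 'M[int]_m) (B : 'M[int]_n) :
  tensmx (map_mx intr A) (map_mx intr B) = map_mx intr (tensG A B).
Proof. by apply/matrixP => k l; rewrite !mxE intrM. Qed.

Definition cA : algC := (169%:R)^-1.
Definition cB : algC := (26%:R)^-1.
Definition cR : algC := (2%:R)^-1.
Definition Emx x a : 'M[algC]_2 := cA *: map_mx intr (EN x a).
Definition Fmx y b : 'M[algC]_2 := cB *: map_mx intr (FN y b).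
Definition rhomx : 'M[algC]_(2 * 2) := cR *: map_mx intr rhoN.

Lemma inv_nat_conj (n : nat) : ((n%:R : algC)^-1)^* = (n%:R)^-1.
Proof. by rewrite fmorphV rmorph_nat. Qed.

Lemma inv_nat_mul (n : nat) : (0 < n)%N -> (n%:R : algC)^-1 * (n%:R : int)%:~R = 1.
Proof. by move=> hn; rewrite rmorph_nat mulVf // pnatr_eq0 -lt0n. Qed.

Lemma psd_E x a : psdmx (Emx x a).
Proof.
apply: (psd_scaled (k := 169%:R)) (EN_sym x a) _ (inv_nat_mul _) (inv_nat_conj _) => //.
exact: EN_idem.
Qed.

Lemma psd_F y b : psdmx (Fmx y b).
Proof.
apply: (psd_scaled (k := 26%:R)) (FN_sym y b) _ (inv_nat_mul _) (inv_nat_conj _) => //.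
exact: FN_idem.
Qed.

Lemma psd_rho : psdmx rhomx.
Proof.
apply: (psd_scaled (k := 2%:R)) rhoN_sym _ (inv_nat_mul _) (inv_nat_conj _) => //.
exact: rhoN_idem.
Qed.

Lemma tr_rho : \tr rhomx = 1.
Proof. by rewrite mxtraceZ trace_map_mx rhoN_tr /cR (@inv_nat_mul 2 isT). Qed.

Lemma sum_E x : Emx x false + Emx x true = 1%:M.
Proof.
rewrite /Emx -scalerDr -map_mxD EN_sum map_scalar_mx scale_scalar_mx.
by rewrite (@inv_nat_mul 169 isT).
Qed.

Lemma sum_F y : Fmx y false + Fmx y true = 1%:M.
Proof.
rewrite /Fmx -scalerDr -map_mxD FN_sum map_scalar_mx scale_scalar_mx.
by rewrite (@inv_nat_mul 26 isT).
Qed.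

Lemma trace_val x a y b :
  \tr (rhomx *m tensmx (Emx x a) (Fmx y b)) = cR * (cA * cB * (tN x a y b)%:~R).
Proof.
rewrite /Emx /Fmx tensmx_scale tensmx_map /rhomx -scalemxAl -scalemxAr -map_mxM.
by rewrite !mxtraceZ trace_map_mx trace_N.
Qed.


Definition PedQ (eps delta : rat) (a b x y : bool) : rat :=
  let e := if x && y then eps else delta in
  if a == b then (1 - e) / 2 else e / 2.

Definition deltaQ : rat := 1 / 26%:R.
Definition epsQ : rat := 1369%:R / 4394%:R.

Lemma Ped_ratr e d a b x y :
  Ped (ratr e) (ratr d) a b x y = ratr (PedQ e d a b x y).
Proof.
rewrite /Ped /PedQ; case: (a == b); case: (x && y);
  by rewrite fmorph_div ?rmorphB ?rmorph1 rmorph_nat.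
Qed.

Lemma quantum_Ped : quantum_system (Ped (ratr epsQ) (ratr deltaQ)).
Proof.
exists 2%N, 2%N, rhomx, Emx, Fmx.
split; first by split; [exact: psd_rho | exact: tr_rho].
split; first by move=> x; split; [exact: psd_E | split; [exact: psd_E | exact: sum_E]].
split; first by move=> y; split; [exact: psd_F | split; [exact: psd_F | exact: sum_F]].
move=> a b x y; rewrite trace_val Ped_ratr.
have -> : cR * (cA * cB * (tN x a y b)%:~R) =
  ratr (2%:R^-1 * (169%:R^-1 * 26%:R^-1 * (tN x a y b)%:~R)).
  have hn : forall n : nat, ratr ((n%:R : rat)^-1) = (n%:R : algC)^-1.
    by move=> n; rewrite fmorphV rmorph_nat.
  have hz : ratr ((tN x a y b)%:~R) = (tN x a y b)%:~R :> algC by rewrite rmorph_int.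
  by rewrite [in RHS]rmorphM /= [in RHS]rmorphM /= [in RHS]rmorphM /= !hn hz.
congr ratr.
by case: x; case: a; case: y; case: b; apply/eqP; vm_compute.
Qed.


Lemma corr_Ped e d x y :
  corr (Ped e d) x y = 1 - 2 * (if x && y then e else d).
Proof.
rewrite /corr /Ped /=; set t := (if x && y then e else d).
transitivity ((1 - t - t) / 2 + (1 - t - t) / 2); first by cring.
by rewrite -splitr mulr_natl mulr2n; cring.
Qed.

Lemma corr_ndp0 P x y : corr (ndp 0 P) x y = 1.
Proof. by rewrite /corr /= !subr0 addr0. Qed.

Lemma NL_sym (P : bsystem) (c d : algC) :
  (forall x y, corr P x y = if x && y then d else c) -> 0 <= d -> d <= c ->
  NL P = c + c + c - d.
Proof.
move=> hc d0 dc; rewrite /NL /chsh !hc /=.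
have -> : c + c + d - c = c + d by cring.
have -> : c + d + c - c = c + d by cring.
have -> : d + c + c - c = c + d by cring.
have cd0 : 0 <= c + d by apply: addr_ge0 => //; apply: le_trans dc.
have h3 : c + d <= c + c + c - d.
  rewrite -subr_ge0.
  have -> : c + c + c - d - (c + d) = (c - d) + (c - d) by cring.
  by apply: addr_ge0; rewrite subr_ge0.
rewrite maxxx !ger0_norm //; last exact: le_trans h3.
by rewrite (max_l h3) (max_l h3).
Qed.


Definition cq : rat := 1 - 2 * deltaQ.
Definition dq : rat := 1 - 2 * epsQ.

Lemma ratr_lin (q : rat) : 1 - 2 * ratr q = ratr (1 - 2 * q) :> algC.
Proof.
by rewrite (rmorphB (@ratr algC)) (rmorph1 (@ratr algC)) (rmorphM (@ratr algC))
  (rmorph_nat (@ratr algC)).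
Qed.

Lemma real_ratr (q : rat) : (ratr q : algC) \is Num.real.
Proof. exact: Creal_Crat (Crat_rat q). Qed.
Lemma hde : deltaQ < epsQ. Proof. by vm_compute. Qed.
Lemma hd0 : 0 < deltaQ. Proof. by vm_compute. Qed.
Lemma he2 : epsQ < 1 / 2%:R. Proof. by vm_compute. Qed.
Lemma hdq0 : 0 <= dq. Proof. by vm_compute. Qed.

Lemma cd_bounds : [/\ 0 <= dq, dq <= cq, 0 <= dq * dq & dq * dq <= cq * cq].
Proof.
have d0 := hdq0.
have dc : dq <= cq.
  rewrite /dq /cq lerD2l lerN2; apply: ler_wpM2l; first exact: ler0n.
  exact: ltW hde.
split.
- exact: d0.
- exact: dc.
- exact: (mulr_ge0 d0 d0).
- exact: (ler_pM d0 d0 dc dc).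
Qed.

Lemma ratr_e1 (a : rat) :
  (ratr a + ratr a + ratr a) * (1 - ratr a) = ratr ((a + a + a) * (1 - a)) :> algC.
Proof.
by rewrite !(rmorphM (@ratr algC)) !(rmorphD (@ratr algC)) ?(rmorphN (@ratr algC))
     (rmorph1 (@ratr algC)).
Qed.

Lemma ratr_e2 (a : rat) : 1 - ratr a = ratr (1 - a) :> algC.
Proof.
by rewrite !(rmorphD (@ratr algC)) ?(rmorphN (@ratr algC)) (rmorph1 (@ratr algC)).
Qed.

Lemma ratr_e3 (a b : rat) : ratr a * ratr b = ratr (a * b) :> algC.
Proof. by rewrite (rmorphM (@ratr algC)). Qed.

Lemma ratr_e4 (a b : rat) : ratr a + ratr a + ratr a - ratr b = ratr (a + a + a - b) :> algC.
Proof. by rewrite !(rmorphD (@ratr algC)) (rmorphN (@ratr algC)). Qed.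

Lemma big_ineq_gen (a b : rat) :
  (a + a + a) * (1 - a) < 3%:R / 8%:R * (3%:R / 5%:R) ->
  0 <= (3%:R / 8%:R : rat) <= b -> 0 <= (3%:R / 5%:R : rat) <= 1 - b ->
  (ratr a : algC) + ratr a + ratr a - ratr b <
  ratr (a * a) + ratr (a * a) + ratr (a * a) - ratr (b * b).
Proof.
move=> h1 /andP[h2 h3] /andP[h4 h5].
rewrite -!ratr_e3.
set c := ratr a; set d := ratr b.
rewrite -subr_gt0.
have -> : c * c + c * c + c * c - d * d - (c + c + c - d) =
          d * (1 - d) - (c + c + c) * (1 - c) by cring.
rewrite subr_gt0 /c /d ratr_e1 ratr_e2.
apply: (@lt_le_trans _ _ (ratr (3%:R / 8%:R) * ratr (3%:R / 5%:R))).
  by rewrite ratr_e3 ltr_rat.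
apply: ler_pM.
- by rewrite ler0q.
- by rewrite ler0q.
- by rewrite ler_rat.
- by rewrite ler_rat.
Qed.

Lemma two_lt_gen (a b : rat) : 2%:R < a + a + a - b ->
  2 < (ratr a : algC) + ratr a + ratr a - ratr b.
Proof.
move=> h; rewrite ratr_e4.
have -> : (2 : algC) = ratr 2%:R by rewrite (rmorph_nat (@ratr algC)).
by rewrite ltr_rat.
Qed.

Lemma n1 : (cq + cq + cq) * (1 - cq) < 3%:R / 8%:R * (3%:R / 5%:R).
Proof. by vm_compute. Qed.
Lemma n2 : 0 <= (3%:R / 8%:R : rat) <= dq. Proof. by vm_compute. Qed.
Lemma n3 : 0 <= (3%:R / 5%:R : rat) <= 1 - dq. Proof. by vm_compute. Qed.
Lemma n4 : 2%:R < cq + cq + cq - dq. Proof. by vm_compute. Qed.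

Theorem theorem2 :
  exists (delta eps : algC) (n : nat),
    [/\ delta \is Num.real, eps \is Num.real,
        0 < delta, delta < eps & eps < 1 / 2] /\ (1 < n)%N /\
    quantum_system (Ped eps delta) /\
    NL (ndp n (Ped eps delta)) > NL (Ped eps delta) /\
    NL (Ped eps delta) > 2.
Proof.
exists (ratr deltaQ), (ratr epsQ), 2%N.
have hcorr : forall x y, corr (Ped (ratr epsQ) (ratr deltaQ)) x y =
    if x && y then ratr dq else ratr cq.
  by move=> x y; rewrite corr_Ped; case: (x && y); rewrite ratr_lin.
have hcorr2 : forall x y, corr (ndp 2 (Ped (ratr epsQ) (ratr deltaQ))) x y =
    if x && y then ratr (dq * dq) else ratr (cq * cq).
  move=> x y.
  change (ndp 2 _) with (xor_comb (Ped (ratr epsQ) (ratr deltaQ))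
     (xor_comb (Ped (ratr epsQ) (ratr deltaQ)) (ndp 0 (Ped (ratr epsQ) (ratr deltaQ))))).
  rewrite !corr_xor corr_ndp0 mulr1 hcorr.
  by case: (x && y); rewrite ratr_e3.
have [d0 dc dd0 ddc] := cd_bounds.
have NL1 := NL_sym hcorr.
have NL2 := NL_sym hcorr2.
rewrite NL1; last 2 first.
- rewrite ler0q; exact: d0.
- rewrite ler_rat; exact: dc.
rewrite NL2; last 2 first.
- rewrite ler0q; exact: dd0.
- rewrite ler_rat; exact: ddc.
split.
  split.
  - exact: real_ratr.
  - exact: real_ratr.
  - rewrite ltr0q; exact: hd0.
  - rewrite ltr_rat; exact: hde.
  - have -> : (1 / 2 : algC) = ratr (1 / 2%:R).
      by rewrite (fmorph_div (@ratr algC)) (rmorph1 (@ratr algC)) (rmorph_nat (@ratr algC)).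
    rewrite ltr_rat; exact: he2.
split; first exact: isT.
split; first exact: quantum_Ped.
split.
  exact: (big_ineq_gen n1 n2 n3).
exact: (two_lt_gen n4).
Qed.
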